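(* For every $0<\varepsilon\le1$ there is a sequence $(n_j,g_j)$ of pairs of positive integers such that $\frac{C(g_j,n_j)}{n_j}\gtrsim\varepsilon$ and $\frac{g_j}{n_j}\lesssim\varepsilon^2$ as $j\to\infty$.
   Context: A set $S$ of integers is a $B^*[g]\pmod n$ set if for every integer $m$ there are at most $g$ ordered pairs $(s_1,s_2)\in S\times S$ with $s_1+s_2\equiv m\pmod n$. $C(g,n)$ is the largest cardinality of a $B^*[g]\pmod n$ set contained in $\{1,\dots,n\}$. For positive sequences, $a_j\gtrsim b_j$ (equivalently $b_j\lesssim a_j$) means $\liminf_{j\to\infty}a_j/b_j\ge1$. *)

(* Defs.v *)
From Stdlib Require Import Reals.
From mathcomp Require Import all_boot.


(* Elements of {1,...,n} are encoded as i : 'I_n standing for the integer i+1. *)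
Definition elt {n : nat} (i : 'I_n) : nat := (nat_of_ord i).+1.

(* Every residue class
   mod n is represented by a natural number m, represented by some m : 'I_n (n >= 1), quantifying over 'I_n suffices. *)
Definition Bstar (g n : nat) (S : {set 'I_n}) : bool :=
  [forall m : 'I_n,
    #|[set p : 'I_n * 'I_n | (p.1 \in S) && (p.2 \in S) &&
         (((elt p.1 + elt p.2) %% n)%N == (m %% n)%N)]| <= g]%N.

Definition Cgn (g n : nat) : nat :=
  \max_(S : {set 'I_n} | Bstar g n S) #|S|.

(* a_j >~ b_j  :<->  liminf a_j / b_j >= 1, unfolded. *)
Definition asym_ge (a b : nat -> R) : Prop :=
  forall delta : R, Rlt 0 delta ->
    exists J : nat, forall j : nat, (J <= j)%N -> Rle (Rminus 1 delta) (Rdiv (a j) (b j)).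

(* Main.v *)
Require Import Defs.
From Stdlib Require Import Reals.
From mathcomp Require Import all_boot.
From Stdlib Require Import Lra Lia ZArith.
From mathcomp Require Import ssrnat all_order all_algebra zify.
Import Order.TTheory GRing.Theory Num.Theory.
Delimit Scope nat_scope with N.
Delimit Scope int_scope with Z.
Delimit Scope ring_scope with R.

Section IntA.
Local Open Scope ring_scope.

Lemma small_mul0 (p d : int) : 0 < p -> - p < d * p -> d * p < p -> d = 0.
Proof.
move=> hp h1 h2.
have [hd|hd] : (d <= 0) \/ (0 < d) by lia.
- have [hd'|hd'] : (d = 0) \/ (d <= -1) by lia. by [].
  nia.
- nia.
Qed.

Lemma small_mul01 (p d : int) : 0 < p -> - p < d * p -> d * p < 2 * p -> 0 <= d <= 1.
Proof.
move=> hp h1 h2.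
have [hd|[hd|hd]] : (d <= -1) \/ (0 <= d <= 1) \/ (2 <= d) by lia.
- nia.
- by [].
- nia.
Qed.

Lemma mod_unique (p x w c : int) : 0 < p -> 0 <= w < p -> x = w + c * p ->
  (x %% p)%Z = w /\ (x %/ p)%Z = c.
Proof.
move=> hp hw hx.
have hr0 : 0 <= (x %% p)%Z by apply: modz_ge0; lia.
have hr1 : (x %% p)%Z < p by apply: ltz_pmod.
have hd := divz_eq x p.
have h0 : ((x %/ p)%Z - c) = 0.
  apply: (@small_mul0 p) => //; nia.
split; nia.
Qed.


Definition Uf (p M u : int) : int := ((M - u) %% p)%Z.
Definition ef (p M u : int) : int := ((M - u - Uf p M u) %/ p)%Z.
Definition Kf (p M u j : int) : int := (ef p M u %/ p)%Z - j - Uf p M u * ef p M u.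
Definition sf (p M u : int) : int := Uf p M u - u.
Definition phif (p M u j v : int) : int := ((Kf p M u j + v * sf p M u) %% p)%Z.

Lemma core (p t M k u1 v1 j1 a1 u2 v2 j2 a2 : int) :
  0 < p -> t < p -> 0 <= u1 < p -> 0 <= v1 < p -> 0 <= u2 < p -> 0 <= v2 < p ->
  0 <= j2 < t ->
  u1 + p * (v1 + p * (u1 * v1 + j1 - a1 * p)) + (u2 + p * (v2 + p * (u2 * v2 + j2 - a2 * p)))
    = M + k * (p * (p * p)) ->
  0 <= phif p M u1 j1 v1 <= t.
Proof.
move=> hp ht hu1 hv1 hu2 hv2 hj2 heq.
set z1 := u1 * v1 + j1 - a1 * p.
set z2 := u2 * v2 + j2 - a2 * p.
set E := v1 + v2 + p * (z1 + z2) - k * p * p.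
have hM : M = u1 + p * (v1 + p * z1) + (u2 + p * (v2 + p * z2)) - k * (p * (p * p)).
  by rewrite heq; nia.
have hU : Uf p M u1 = u2.
  have h : M - u1 = u2 + E * p by rewrite hM /E; nia.
  by have [h1 _] := @mod_unique p (M - u1) u2 E hp hu2 h.
have hE : ef p M u1 = E.
  have h : M - u1 - u2 = 0 + E * p by rewrite hM /E; nia.
  have h0 : 0 <= (0:int) < p by lia.
  by rewrite /ef hU; have [_ h1] := @mod_unique p (M - u1 - u2) 0 E hp h0 h.
set F := (E %/ p)%Z.
set r := (E %% p)%Z.
have hr0 : 0 <= r by apply: modz_ge0; lia.
have hr1 : r < p by apply: ltz_pmod.
have hdE := divz_eq E p.
set f := z1 + z2 - k * p.
have hf : E - v1 - v2 = p * f by rewrite /E /f; nia.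
have hFf : 0 <= F - f <= 1.
  apply: (@small_mul01 p) => //; nia.
have hw : 0 <= j2 + F - f < p by lia.
have h : Kf p M u1 j1 + v1 * sf p M u1 = j2 + F - f + (- (u2 * f + a1 + a2 + k)) * p.
  rewrite /Kf /sf hU hE -/F /f /E /z1 /z2; nia.
have [h1 _] := @mod_unique p _ _ _ hp hw h.
rewrite /phif h1; lia.
Qed.

End IntA.

Section IntPart.
Local Open Scope ring_scope.

Lemma euclidz (p : nat) (x y c : int) : prime p -> x * y = c * p%:Z ->
  (exists c', x = c' * p%:Z) \/ (exists c', y = c' * p%:Z).
Proof.
move=> pp h.
have : (p%:Z %| x * y)%Z by apply/dvdzP; exists c.
rewrite dvdzE abszM /= Euclid_dvdM // => /orP [] hd; [left|right];
  apply/dvdzP; rewrite dvdzE; exact: hd.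
Qed.

Lemma good_inj (p : nat) (K s v v' : int) : prime p -> (s %% p != 0)%Z ->
  0 <= v < p%:Z -> 0 <= v' < p%:Z -> ((K + v * s) %% p = (K + v' * s) %% p)%Z -> v = v'.
Proof.
move=> pp hs hv hv' h.
have hp : 0 < p%:Z by have := prime_gt0 pp; lia.
have e1 := divz_eq (K + v * s) p.
have e2 := divz_eq (K + v' * s) p.
have : (v - v') * s = (((K + v * s) %/ p)%Z - ((K + v' * s) %/ p)%Z) * p%:Z.
  rewrite -h in e2. lia.
move/(@euclidz p _ _ _ pp) => [[c hc]|[c hc]].
- have : c = 0 by apply: (@small_mul0 p) => //; lia.
  move=> c0; rewrite c0 mul0r in hc; lia.
- by move: hs; rewrite hc modzMl eqxx.
Qed.


Lemma bad_unique (p : nat) (M u u' : int) : prime p -> (2 < p)%N ->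
  0 <= u < p%:Z -> 0 <= u' < p%:Z ->
  (sf p M u %% p = 0)%Z -> (sf p M u' %% p = 0)%Z -> u = u'.
Proof.
move=> pp p2 hu hu' h h'.
have hp : 2 < p%:Z by lia.
have e3 := divz_eq (sf p M u) p.
have e4 := divz_eq (sf p M u') p.
rewrite h addr0 /sf /Uf in e3. rewrite h' addr0 /sf /Uf in e4.
have e1 := divz_eq (M - u) p.
have e2 := divz_eq (M - u') p.
move: e1 e2 e3 e4.
generalize ((M - u) %% p)%Z => U.
generalize ((M - u') %% p)%Z => U'.
generalize ((M - u) %/ p)%Z => A.
generalize ((M - u') %/ p)%Z => A'.
generalize ((U - u) %/ p)%Z => B.
generalize ((U' - u') %/ p)%Z => B'.
move=> e1 e2 e3 e4.
have : (u' - u) * 2 = (A + B - A' - B') * p%:Z.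
  lia.
move/(@euclidz p _ _ _ pp) => [[c hc]|[c hc]].
- have : c = 0 by apply: (@small_mul0 p) => //; lia.
  move=> c0; rewrite c0 mul0r in hc; lia.
- have [c0|[c1|c2]] : c <= 0 \/ c = 1 \/ 2 <= c by lia.
  + nia.
  + rewrite c1 mul1r in hc; lia.
  + nia.
Qed.

End IntPart.


Definition Fq (p t : nat) (q : ('I_p * 'I_t) * 'I_p) : nat :=
  q.1.1 + p * (q.2 + p * ((q.1.1 * q.2 + q.1.2) %% p)).

Lemma Fq_lt p t q : Fq p t q < p ^ 3.
Proof.
rewrite /Fq.
have hu := ltn_ord q.1.1. have hv := ltn_ord q.2.
have hp : 0 < p by lia.
have hz := ltn_pmod (q.1.1 * q.2 + q.1.2) hp.
move: hu hv hz.
generalize ((q.1.1 * q.2 + q.1.2) %% p) => z.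
generalize (nat_of_ord q.1.1) => u.
generalize (nat_of_ord q.2) => v.
move=> hu hv hz.
have h1 : v + p * z < p * p by nia.
rewrite expnS expnS expn1.
nia.
Qed.

Definition Fo p t q : 'I_(p ^ 3) := Ordinal (Fq_lt p t q).

Lemma digit p u X : u < p -> (u + p * X) %% p = u /\ (u + p * X) %/ p = X.
Proof.
move=> hu; have hp : 0 < p by lia.
rewrite addnC mulnC; split; first by rewrite modnMDl modn_small.
by rewrite divnMDl // divn_small // addn0.
Qed.

Lemma Fo_inj p t : t <= p -> injective (Fo p t).
Proof.
move=> htp [[u j] v] [[u' j'] v'] /(congr1 val) /=; rewrite /Fq /=.
move=> h.
have [a1 a2] := @digit p u (v + p * ((u * v + j) %% p)) (ltn_ord u).
have [b1 b2] := @digit p u' (v' + p * ((u' * v' + j') %% p)) (ltn_ord u').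
have hu : u = u' :> nat by rewrite -a1 h b1.
have hX : v + p * ((u * v + j) %% p) = v' + p * ((u' * v' + j') %% p) by rewrite -a2 h b2.
have [c1 c2] := @digit p v ((u * v + j) %% p) (ltn_ord v).
have [d1 d2] := @digit p v' ((u' * v' + j') %% p) (ltn_ord v').
have hv : v = v' :> nat by rewrite -c1 hX d1.
have hz : (u * v + j) %% p = (u' * v' + j') %% p by rewrite -c2 hX d2.
rewrite -hu -hv in hz.
have hj : j = j' :> nat.
  have : (u * v + j == u * v + j' %[mod p]) by apply/eqP.
  rewrite eqn_modDl !modn_small //; first by move/eqP.
  - exact: leq_trans (ltn_ord j') htp.
  - exact: leq_trans (ltn_ord j) htp.
by congr (_, _); [congr (_, _)|]; apply: val_inj.
Qed.

Lemma valid_phi p t (m : 'I_(p ^ 3)) q q' : prime p -> t < p ->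
  (elt (Fo p t q) + elt (Fo p t q')) %% p ^ 3 == m %% p ^ 3 ->
  (0 <= phif p (m%:Z - 2) q.1.1 q.1.2 q.2 <= t%:Z)%R.
Proof.
case: m => mm hmm /=.
move=> pp htp /eqP hm.
have hp : 0 < p by apply: prime_gt0.
case: q hm => [[u1 j1] v1]; case: q' => [[u2 j2] v2].
rewrite /elt /Fo /= /Fq /= => hm.
have E1 := divn_eq ((u1 + p * (v1 + p * ((u1 * v1 + j1) %% p))).+1 +
          (u2 + p * (v2 + p * ((u2 * v2 + j2) %% p))).+1) (p ^ 3).
have E2 := divn_eq mm (p ^ 3).
rewrite hm in E1.
have Z1 := divn_eq (u1 * v1 + j1) p.
have Z2 := divn_eq (u2 * v2 + j2) p.
have hp3 : p ^ 3 = p * (p * p) by rewrite expnS expnS expn1.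
rewrite hp3 in E1 E2.
have hu1 := ltn_ord u1. have hv1 := ltn_ord v1. have hj1 := ltn_ord j1.
have hu2 := ltn_ord u2. have hv2 := ltn_ord v2. have hj2 := ltn_ord j2.
move: E1 E2 Z1 Z2.
generalize ((u1 * v1 + j1) %% p) => z1.
generalize ((u2 * v2 + j2) %% p) => z2.
generalize ((u1 * v1 + j1) %/ p) => a1.
generalize ((u2 * v2 + j2) %/ p) => a2.
generalize (mm %% (p * (p * p))) => r.
generalize (mm %/ (p * (p * p))) => B.
generalize (((u1 + p * (v1 + p * z1)).+1 + (u2 + p * (v2 + p * z2)).+1) %/ (p * (p * p))) => A.
move=> E1 E2 Z1 Z2.
apply: (@core p t (mm%:Z - 2) (A%:Z - B%:Z) u1 v1 j1 a1 u2 v2 j2 a2); lia.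
Qed.

Lemma absz_le (x : int) (t : nat) : (0 <= x <= t%:Z)%R -> (`|x| < t.+1)%N.
Proof. move=> h; have e := @gez0_abs x; lia. Qed.

Lemma absz_inj0 (x y : int) : (0 <= x)%R -> (0 <= y)%R -> `|x|%N = `|y|%N -> x = y.
Proof. move=> hx hy h; have e1 := @gez0_abs x; have e2 := @gez0_abs y; lia. Qed.


Definition Sset p t : {set 'I_(p ^ 3)} := Fo p t @: setT.

Lemma card_S p t : t <= p -> #|Sset p t| = p * t * p.
Proof.
move=> htp; rewrite /Sset card_imset; last exact: Fo_inj.
by rewrite cardsT !card_prod !card_ord.
Qed.

Lemma Bstar_S p t : prime p -> 2 < p -> t < p ->
  Bstar (p * (t.+1 * t.+1)) (p ^ 3) (Sset p t).
Proof.
move=> pp p2 htp; apply/forallP => m.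
set P := [set pr : 'I_(p ^ 3) * 'I_(p ^ 3) | _].
set valid := [set q : ('I_p * 'I_t) * 'I_p | [exists q',
   (elt (Fo p t q) + elt (Fo p t q')) %% p ^ 3 == m %% p ^ 3]].
have step1 : #|P| <= #|valid|.
  rewrite -(@card_in_imset _ _ fst P); last first.
    move=> [a b] [a' b']; rewrite !inE /= => /andP [_ /eqP h1] /andP [_ /eqP h2] /= hx.
    subst a'.
    have e : forall x y : nat, x.+1 + y.+1 = x.+2 + y by move=> *; lia.
    move: h1 h2; rewrite /elt !e => h1 h2.
    have : (a.+2 + b == a.+2 + b' %[mod p ^ 3]) by rewrite h1 h2.
    rewrite eqn_modDl !modn_small // => /eqP hb.
    by congr (_, _); apply: val_inj.
  apply: leq_trans (leq_imset_card (Fo p t) valid).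
  apply: subset_leq_card; apply/subsetP => x /imsetP [[a b] hab ->].
  move: hab; rewrite inE /= => /andP [/andP [ha hb] he].
  case/imsetP: ha => q _ hq; case/imsetP: hb => q' _ hq'.
  apply/imsetP; exists q => //.
  by rewrite inE; apply/existsP; exists q'; rewrite -hq -hq'.
have step2 : #|valid| <= p * t * t.+1 + t * p.
  pose good (u : 'I_p) := ((sf p (m%:Z - 2)%R u %% p)%Z != 0%R).
  pose Psi (q : ('I_p * 'I_t) * 'I_p) : ((('I_p * 'I_t) * 'I_t.+1) + ('I_t * 'I_p))%type :=
    if good q.1.1 then inl ((q.1.1, q.1.2), inord `|phif p (m%:Z - 2)%R q.1.1 q.1.2 q.2|%N)
    else inr (q.1.2, q.2).
  rewrite -(@card_in_imset _ _ Psi valid).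
    apply: leq_trans (max_card _) _.
    by rewrite card_sum !card_prod !card_ord.
  move=> [[u j] v] [[u' j'] v']; rewrite !inE => /existsP [q1 h1] /existsP [q2 h2].
  have hphi : (0 <= phif p (m%:Z - 2)%R u j v <= t%:Z)%R := @valid_phi p t m _ _ pp htp h1.
  have hphi' : (0 <= phif p (m%:Z - 2)%R u' j' v' <= t%:Z)%R := @valid_phi p t m _ _ pp htp h2.
  rewrite /Psi /=.
  case: (boolP (good u)) => gu; case: (boolP (good u')) => gu' //=.
  - move=> [] hu hj he. subst u' j'.
    move/(congr1 (@nat_of_ord _)): he; rewrite !inordK; last 2 first.
      1,2: by apply: absz_le; lia.
    move=> he.
    have hv1 := ltn_ord v; have hv2 := ltn_ord v'.
    have hvv : Posz v = Posz v'.
      apply: (@good_inj p (Kf p (m%:Z - 2)%R u j) (sf p (m%:Z - 2)%R u)) => //; try lia.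
      apply: absz_inj0 he; [move: hphi|move: hphi']; rewrite /phif; lia.
    have -> : v = v' by apply: ord_inj; lia.
    by [].
  - move=> [] hj hv. subst j' v'.
    have hu1 := ltn_ord u; have hu2 := ltn_ord u'.
    have huu : Posz u = Posz u'.
      apply: (@bad_unique p (m%:Z - 2)%R) => //; try lia.
      - by move: gu; rewrite negbK => /eqP.
      - by move: gu'; rewrite negbK => /eqP.
    have -> : u = u' by apply: ord_inj; lia.
    by [].
have : p * t * t.+1 + t * p <= p * (t.+1 * t.+1) by nia.
lia.
Qed.


Lemma comb p t : prime p -> (2 < p)%N -> (t < p)%N ->
  (p * t * p <= Cgn (p * (t.+1 * t.+1)) (p ^ 3))%N.
Proof.
move=> pp p2 htp.
rewrite -card_S; last exact: ltnW.
rewrite /Cgn.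
by apply: (leq_bigmax_cond (F := fun S : {set (ordinal (p ^ 3))} => #|S|)); apply: Bstar_S.
Qed.

Section Real.
Local Open Scope R_scope.

Lemma INR_muln (a b : nat) : INR (a * b)%N = INR a * INR b.
Proof. exact: mult_INR. Qed.

Lemma INR_expn3 (a : nat) : INR (a ^ 3)%N = INR a * (INR a * INR a).
Proof. by rewrite expnS expnS expn1 !INR_muln. Qed.

End Real.

Definition pseq (j : nat) : nat := s2val (prime_above j.+2).

Lemma pseq_spec j : (j.+2 < pseq j)%N /\ prime (pseq j).
Proof. by rewrite /pseq; case: (prime_above _) => p h1 h2 /=. Qed.

Definition tseq (eps : R) (j : nat) : nat :=
  Z.to_nat (up (Rmult eps (Rminus (INR (pseq j)) 1)) - 1).

Section Real2.
Local Open Scope R_scope.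

Lemma tseq_spec eps j : 0 < eps -> eps <= 1 ->
  INR (tseq eps j) <= eps * (INR (pseq j) - 1) /\
  eps * (INR (pseq j) - 1) - 1 < INR (tseq eps j) /\ (tseq eps j < pseq j)%N.
Proof.
move=> he he1.
have [hj _] := pseq_spec j.
have hp : 3 <= INR (pseq j).
  have : (3 <= pseq j)%coq_nat by apply/ssrnat.leP; lia.
  move/le_INR; rewrite /= ; lra.
rewrite /tseq.
set x := eps * (INR (pseq j) - 1).
have hx : 0 < x by rewrite /x; nra.
have [h1 h2] := archimed x.
have hup : Z.lt 0 (up x) by apply: lt_IZR; lra.
have hT : INR (Z.to_nat (up x - 1)) = IZR (up x) - 1.
  rewrite INR_IZR_INZ Z2Nat.id; last lia.
  by rewrite minus_IZR.
rewrite hT.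
split; first lra.
split; first lra.
have hx2 : x <= INR (pseq j) - 1 by rewrite /x; nra.
apply/ssrnat.ltP; apply: INR_lt; rewrite hT; lra.
Qed.

End Real2.

Section Ratios.
Local Open Scope R_scope.

Lemma ratio1 (C p t eps d : R) : 0 < eps -> eps <= 1 -> 0 < d -> 3 <= p ->
  3 <= p * (d * (eps * eps)) -> t <= eps * (p - 1) -> eps * (p - 1) - 1 < t ->
  p * t * p <= C -> 1 - d <= C / (p * (p * p)) / eps.
Proof.
move=> he he1 hd hp3 h3 ht1 ht2 hCR.
have hde : d * eps * eps * p <= d * eps * p.
  have : 0 <= d * eps * p * (1 - eps) by apply: Rmult_le_pos; [apply: Rmult_le_pos; [apply: Rmult_le_pos|]|]; lra.
  nra.
have h4 : (1 - d) * eps * p <= t by nra.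
have hpp : 0 < p * p by nra.
have key : (1 - d) * (p * (p * p) * eps) <= C.
  have : (1 - d) * eps * p * (p * p) <= t * (p * p) by apply: Rmult_le_compat_r; lra.
  nra.
have hpos : 0 < p * (p * p) * eps by apply: Rmult_lt_0_compat; [nra|lra].
apply: (Rmult_le_reg_r (p * (p * p) * eps)) => //.
have -> : C / (p * (p * p)) / eps * (p * (p * p) * eps) = C by field; lra.
lra.
Qed.

Lemma ratio2 (p t eps d : R) : 0 < eps -> eps <= 1 -> 0 < d -> 3 <= p ->
  3 <= p * (d * (eps * eps)) -> 0 <= t -> t <= eps * (p - 1) ->
  1 - d <= eps ^ 2 / (p * ((t + 1) * (t + 1)) / (p * (p * p))).
Proof.
move=> he he1 hd hp3 h3 ht0 ht1.
have hpp : 0 < p * p by nra.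
have hq : (t + 1) * (t + 1) <= (eps * p + 1) * (eps * p + 1) by nra.
have key : (1 - d) * ((t + 1) * (t + 1)) <= eps * eps * (p * p).
  case: (Rle_lt_dec 1 d) => hd1.
    have : 0 <= (t + 1) * (t + 1) by nra.
    nra.
  have h5 : 2 * eps * p + 1 <= 3 * p by nra.
  have h6 : 3 * p <= d * (eps * eps) * (p * p) by nra.
  nra.
have hG : 0 < p * ((t + 1) * (t + 1)) / (p * (p * p)).
  apply: Rdiv_lt_0_compat; nra.
apply: (Rmult_le_reg_r _ _ _ hG).
have -> : eps ^ 2 / (p * ((t + 1) * (t + 1)) / (p * (p * p))) * (p * ((t + 1) * (t + 1)) / (p * (p * p))) = eps * eps.
  by field; nra.
have -> : (1 - d) * (p * ((t + 1) * (t + 1)) / (p * (p * p))) = (1 - d) * ((t + 1) * (t + 1)) / (p * p).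
  by field; nra.
apply: (Rmult_le_reg_r _ _ _ hpp).
have -> : (1 - d) * ((t + 1) * (t + 1)) / (p * p) * (p * p) = (1 - d) * ((t + 1) * (t + 1)) by field; nra.
lra.
Qed.

End Ratios.

Lemma bigJ (eps d : R) : Rlt 0 eps -> Rlt 0 d -> exists J : nat, forall j, (J <= j)%N ->
  Rle 3 (Rmult (INR (pseq j)) (Rmult d (Rmult eps eps))).
Proof.
move=> he hd.
set y := Rdiv 3 (Rmult d (Rmult eps eps)).
have hpos : Rlt 0 (Rmult d (Rmult eps eps)) by apply: Rmult_lt_0_compat => //; apply: Rmult_lt_0_compat.
have hy : Rlt 0 y by apply: Rdiv_lt_0_compat => //; lra.
have [h1 h2] := archimed y.
have hup : Z.lt 0 (up y) by apply: lt_IZR; lra.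
exists (Z.to_nat (up y)) => j hj.
have [hj2 _] := pseq_spec j.
have : (Z.to_nat (up y) <= pseq j)%coq_nat by apply/ssrnat.leP; lia.
move/le_INR; rewrite INR_IZR_INZ Z2Nat.id; last lia.
move=> hle.
have : Rle y (INR (pseq j)) by lra.
rewrite /y => h.
have := Rmult_le_compat_r _ _ _ (Rlt_le _ _ hpos) h.
rewrite /Rdiv Rmult_assoc Rinv_l; last lra.
lra.
Qed.

Theorem proposition3p6 :
  forall eps : R, Rlt 0 eps -> Rle eps 1 ->
  exists (n g : nat -> nat),
    (forall j, (0 < n j)%N /\ (0 < g j)%N) /\
    asym_ge (fun j => Rdiv (INR (Cgn (g j) (n j))) (INR (n j))) (fun _ => eps) /\
    asym_ge (fun _ => pow eps 2) (fun j => Rdiv (INR (g j)) (INR (n j))).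
Proof.
move=> eps he he1.
exists (fun j => pseq j ^ 3)%N, (fun j => pseq j * ((tseq eps j).+1 * (tseq eps j).+1))%N.
split.
  move=> j; have [h1 _] := pseq_spec j.
  split; first by rewrite expn_gt0; apply/orP; left; lia.
  by rewrite !muln_gt0; apply/andP; split; [lia|].
split.
- move=> d hd; have [J hJ] := @bigJ eps d he hd.
  exists J => j hjJ.
  have h3 := hJ j hjJ.
  have [hp pp] := pseq_spec j.
  have [ht1 [ht2 htp]] := @tseq_spec eps j he he1.
  have hp2 : (2 < pseq j)%N by lia.
  have hC := @comb _ _ pp hp2 htp.
  have hCR := le_INR _ _ (elimT ssrnat.leP hC).
  move: h3 ht1 ht2 hCR.
  rewrite INR_expn3 !INR_muln.
  set C := INR (Cgn _ _).
  set p := INR (pseq j).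
  set t := INR (tseq eps j).
  move=> h3 ht1 ht2 hCR.
  have hp3 : Rle 3 p.
    have : (3 <= pseq j)%coq_nat by apply/ssrnat.leP; lia.
    by move/le_INR; rewrite /p /=; lra.
  exact (@ratio1 _ _ _ _ _ he he1 hd hp3 h3 ht1 ht2 hCR).
- move=> d hd; have [J hJ] := @bigJ eps d he hd.
  exists J => j hjJ.
  have h3 := hJ j hjJ.
  have [hp pp] := pseq_spec j.
  have [ht1 [ht2 htp]] := @tseq_spec eps j he he1.
  move: h3 ht1 ht2.
  rewrite INR_expn3 !INR_muln !S_INR.
  set p := INR (pseq j).
  set t := INR (tseq eps j).
  move=> h3 ht1 ht2.
  have hp3 : Rle 3 p.
    have : (3 <= pseq j)%coq_nat by apply/ssrnat.leP; lia.
    by move/le_INR; rewrite /p /=; lra.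
  have ht0 : Rle 0 t by apply: pos_INR.
  exact: ratio2.
Qed.
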